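(* Consider the setting and SCSG algorithm described in the context, with $\hat A$ nonsingular and $\hat C$ positive definite, and step size $0\le\sigma_\theta\le\frac{\lambda_{\min}}{6\kappa(Q)^2L_G^2}$ (with $\sigma_\omega=\beta\sigma_\theta$). Then for every epoch index $m$, $$\mathbb{E}\|Q^{-1}\Delta_m\|^2=\mathbb{E}\|Q^{-1}\Delta_{m-1,K_{m-1}}\|^2<\infty\ (m\ge1),\qquad\text{i.e. } \mathbb{E}\|Q^{-1}(z_m-z^\star)\|^2<\infty,$$ where the expectation includes the randomness of the geometrically distributed inner-loop lengths.
   Context: Data: $n$ transitions $(s_t,a_t,r_t,s_{t+1})$, $t\in[n]=\{1,\dots,n\}$, a feature map $\phi$ from states to $\mathbb{R}^d$ and a discount factor $\gamma$. Define $\hat A_t=\phi(s_t)(\phi(s_t)-\gamma\phi(s_{t+1}))^\top$, $\hat b_t=r_t\phi(s_t)$, $\hat C_t=\phi(s_t)\phi(s_t)^\top$, and $\hat A,\hat b,\hat C$ their averages over $t\in[n]$; then $(\theta^\star,\omega^\star)=(\hat A^{-1}\hat b,0)$. Let $\beta=\frac{8\lambda_{\max}(\hat A^\top\hat C^{-1}\hat A)}{\lambda_{\min}(\hat C)}$. For $t\in[n]$ set $G_t=\begin{pmatrix}0&-\sqrt\beta\hat A_t^\top\\ \sqrt\beta\hat A_t&\beta\hat C_t\end{pmatrix}$, $g_t=\begin{pmatrix}0\\ \sqrt\beta\hat b_t\end{pmatrix}$, $G=\frac1n\sum_tG_t$, $g=\frac1n\sum_tg_t$, $z^\star=(\theta^\star,\omega^\star/\sqrt\beta)$.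 With this $\beta$, $G$ is diagonalizable with real positive eigenvalues; fix $G=Q\Lambda Q^{-1}$ with $\Lambda$ diagonal. $\lambda_{\min}$ is the smallest eigenvalue of $G$; $\|\cdot\|$ is the Euclidean/spectral norm; $\kappa(Q)=\|Q\|\|Q^{-1}\|$; $L_G^2=\left\|\frac1n\sum_tG_t^\top G_t\right\|$. SCSG (in coordinates $z=(\theta,\omega/\sqrt\beta)$, fixed batch size $B$, deterministic initial point $z_0$): at the start of epoch $m$ the iterate is $z_m$. A subset $\mathcal B\subseteq[n]$ of size $B$ is sampled uniformly at random; $G_m=\frac1B\sum_{t\in\mathcal B}G_t$, $g_m=\frac1B\sum_{t\in\mathcal B}g_t$. Draw $K_m\sim\mathrm{Geom}(\frac B{B+1})$, i.e. $P(K_m=k)=(1-\gamma)\gamma^k$ for $k\ge0$ with $\gamma=\frac B{B+1}$. Set $z_{m,0}=z_m$; for $j=0,\dots,K_m-1$ sample $t_j$ uniformly from $[n]$ independently and set $z_{m,j+1}=z_{m,j}-\sigma_\theta\big(G_{t_j}z_{m,j}+(G_m-G_{t_j})z_m-g_m\big)$; then $z_{m+1}=z_{m,K_m}$. Define $\Delta_m=z_m-z^\star$ and $\Delta_{m,j}=z_{m,j}-z^\star$. *)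

(* Defs.v *)
From HB Require Import structures.
From mathcomp Require Import all_boot all_order all_algebra.
From mathcomp Require Import boolp classical_sets reals ereal sequences.
Set Implicit Arguments. Unset Strict Implicit. Unset Printing Implicit Defensive.
Import Order.TTheory GRing.Theory Num.Theory.
Local Open Scope ring_scope.
Local Open Scope classical_set_scope.

Section SCSGdefs.
Variable R : realType.

Definition vnorm (k : nat) (v : 'cV[R]_k) : R :=
  Num.sqrt (\sum_(i < k) (v i 0) ^+ 2).

Definition specnorm (k : nat) (M : 'M[R]_k) : R :=
  sup [set vnorm (M *m x) | x in [set x : 'cV[R]_k | vnorm x <= 1]].

Definition kappa (k : nat) (Q : 'M[R]_k) : R := specnorm Q * specnorm (invmx Q).

Definition is_lambda_max (k : nat) (M : 'M[R]_k) (l : R) : Prop :=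
  eigenvalue M l /\ forall a, eigenvalue M a -> a <= l.
Definition is_lambda_min (k : nat) (M : 'M[R]_k) (l : R) : Prop :=
  eigenvalue M l /\ forall a, eigenvalue M a -> l <= a.

(* per-sample quantities built from features x t = phi(s_t), x' t = phi(s_{t+1}) *)
Definition Ahat_t (d : nat) (disc : R) (x x' : 'cV[R]_d) : 'M[R]_d :=
  x *m (x - disc *: x')^T.
Definition bhat_t (d : nat) (r : R) (x : 'cV[R]_d) : 'cV[R]_d := r *: x.
Definition Chat_t (d : nat) (x : 'cV[R]_d) : 'M[R]_d := x *m x^T.

Definition avgM (n k : nat) (F : 'I_n -> 'M[R]_k) : 'M[R]_k :=
  (n%:R)^-1 *: \sum_(t < n) F t.
Definition avgV (n k : nat) (F : 'I_n -> 'cV[R]_k) : 'cV[R]_k :=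
  (n%:R)^-1 *: \sum_(t < n) F t.

Definition G_t (d : nat) (beta : R) (At Ct : 'M[R]_d) : 'M[R]_(d + d) :=
  block_mx 0 (- (Num.sqrt beta) *: At^T) ((Num.sqrt beta) *: At) (beta *: Ct).
Definition g_t (d : nat) (beta : R) (bt : 'cV[R]_d) : 'cV[R]_(d + d) :=
  col_mx 0 ((Num.sqrt beta) *: bt).

Definition batchM (n D : nat) (Gt : 'I_n -> 'M[R]_D) (B : nat) (S : {set 'I_n}) :=
  (B%:R)^-1 *: \sum_(t in S) Gt t.
Definition batchV (n D : nat) (gt : 'I_n -> 'cV[R]_D) (B : nat) (S : {set 'I_n}) :=
  (B%:R)^-1 *: \sum_(t in S) gt t.

Definition inner_loop (n D : nat) (Gt : 'I_n -> 'M[R]_D) (Gm : 'M[R]_D)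
  (gm : 'cV[R]_D) (sigma : R) (zm : 'cV[R]_D) (ts : seq 'I_n) : 'cV[R]_D :=
  foldl (fun zj tj => zj - sigma *: (Gt tj *m zj + (Gm - Gt tj) *m zm - gm)) zm ts.

(* Expectation of f(z_m) for SCSG started at the deterministic point z0.
   Randomness of an epoch: batch S uniform among B-subsets of [n] (prob 1/C(n,B)),
   K ~ Geom(B/(B+1)), P(K = k) = (1 - gam) gam^k, and t_0..t_{k-1} i.i.d. uniform
   on [n] (prob n^-k for each k-tuple).  Epochs are independent, so
   E[f(z_{m+1}) | z_0 = z] = E_{epoch}[ E[f(z_m) | z_0 = z_1] ]
   (Tonelli on the discrete product space). *)
Fixpoint scsg_expect (n D : nat) (Gt : 'I_n -> 'M[R]_D) (gt : 'I_n -> 'cV[R]_D)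
  (B : nat) (sigma : R) (f : 'cV[R]_D -> R) (m : nat) (z : 'cV[R]_D) : \bar R :=
  match m with
  | 0 => (f z)%:E
  | m'.+1 =>
    let gam : R := B%:R / (B.+1)%:R in
    (\sum_(S : {set 'I_n} | #|S| == B)
      ((('C(n, B))%:R)^-1)%:E *
      \sum_(0 <= k <oo)
        (((1 - gam) * gam ^+ k)%:E *
         \sum_(ts : k.-tuple 'I_n)
           ((n%:R ^- k)%:E *
            scsg_expect Gt gt B sigma f m'
              (inner_loop Gt (batchM Gt B S) (batchV gt B S) sigma z ts))))%E
  end.

End SCSGdefs.

(* Main.v *)
Require Import Defs.
From HB Require Import structures.
From mathcomp Require Import all_boot all_order all_algebra.
From mathcomp Require Import boolp classical_sets reals ereal sequences.
From mathcomp Require Import ring lra.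
Import Order.TTheory GRing.Theory Num.Theory.
Local Open Scope ring_scope.

Set Implicit Arguments. Unset Strict Implicit.

Section Vec.
Variable R : realType.
Variable D : nat.
Implicit Types x y z : 'cV[R]_D.
Implicit Types M : 'M[R]_D.

Definition dot x y : R := \sum_(i < D) x i 0 * y i 0.
Definition sq x : R := dot x x.

Lemma sq_ge0 x : 0 <= sq x.
Proof. by apply: sumr_ge0 => i _; rewrite -expr2 sqr_ge0. Qed.

Lemma vnorm_sq x : vnorm x ^+ 2 = sq x.
Proof.
rewrite /vnorm sqr_sqrtr; last by apply: sumr_ge0 => i _; rewrite sqr_ge0.
by apply: eq_bigr => i _; rewrite expr2.
Qed.

Lemma vnorm_ge0 x : 0 <= vnorm x.
Proof. exact: sqrtr_ge0. Qed.

Lemma dotC x y : dot x y = dot y x.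
Proof. by apply: eq_bigr => i _; rewrite mulrC. Qed.

Lemma dotDr x y z : dot x (y + z) = dot x y + dot x z.
Proof. by rewrite /dot -big_split; apply: eq_bigr => i _; rewrite mxE mulrDr. Qed.

Lemma dotZr a x y : dot x (a *: y) = a * dot x y.
Proof. by rewrite /dot mulr_sumr; apply: eq_bigr => i _; rewrite mxE mulrCA. Qed.

Lemma dotNr x y : dot x (- y) = - dot x y.
Proof. by rewrite -scaleN1r dotZr mulN1r. Qed.

Lemma dot_sumr (I : finType) x (F : I -> 'cV[R]_D) :
  dot x (\sum_t F t) = \sum_t dot x (F t).
Proof.
rewrite /dot exchange_big /=; apply: eq_bigr => i _.
by rewrite summxE mulr_sumr.
Qed.

Lemma sqD x y : sq (x + y) = sq x + 2 * dot x y + sq y.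
Proof.
rewrite /sq /dot mulr_sumr -!big_split /=; apply: eq_bigr => i _.
rewrite mxE; ring.
Qed.

Lemma sqB_scale x a y : sq (x - a *: y) = sq x - 2 * a * dot x y + a ^+ 2 * sq y.
Proof.
rewrite /sq /dot !mulr_sumr -sumrN -!big_split /=; apply: eq_bigr => i _.
rewrite !mxE; ring.
Qed.

Lemma sqZ a x : sq (a *: x) = a ^+ 2 * sq x.
Proof. rewrite /sq /dot mulr_sumr; apply: eq_bigr => i _; rewrite mxE; ring. Qed.

Lemma sqN x : sq (- x) = sq x.
Proof. by rewrite -scaleN1r sqZ sqrrN expr1n mul1r. Qed.

Lemma sqD_le x y : sq (x + y) <= 2 * sq x + 2 * sq y.
Proof.
rewrite /sq /dot !mulr_sumr -big_split /=; apply: ler_sum => i _.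
rewrite mxE; have := sqr_ge0 (x i 0 - y i 0); nra.
Qed.

Lemma young x y e : 0 < e -> 2 * dot x y <= e * sq x + sq y / e.
Proof.
move=> e0; rewrite /sq /dot [2 * _]mulr_sumr [e * _]mulr_sumr [X in _ + X]mulr_suml -big_split /=.
apply: ler_sum => i _.
set a := x i 0; set b := y i 0.
have h : 0 <= (e * a - b) ^+ 2 / e by rewrite divr_ge0 ?sqr_ge0 ?ltW.
rewrite -subr_ge0.
have -> : e * (a * a) + b * b / e - 2 * (a * b) = (e * a - b) ^+ 2 / e.
  by field; rewrite gt_eqF.
done.
Qed.

Lemma sq_eq0 x : sq x = 0 -> x = 0.
Proof.
move=> h; apply/matrixP => i j; rewrite (ord1 j) mxE.
have /psumr_eq0P H : \sum_(k < D) x k 0 * x k 0 = 0 by [].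
have /eqP : x i 0 * x i 0 = 0.
  by apply: H => // k _; rewrite -expr2 sqr_ge0.
by rewrite mulf_eq0 orbb => /eqP.
Qed.

Lemma vnorm_eq0 x : vnorm x = 0 -> x = 0.
Proof. by move=> h; apply: sq_eq0; rewrite -vnorm_sq h expr0n. Qed.

Lemma vnorm0 : vnorm (0 : 'cV[R]_D) = 0.
Proof.
by rewrite /vnorm big1 ?sqrtr0 // => i _; rewrite mxE expr0n.
Qed.

Lemma dot0l y : dot 0 y = 0.
Proof. by rewrite /dot big1 // => i _; rewrite mxE mul0r. Qed.

Lemma vnormZ a x : vnorm (a *: x) = `|a| * vnorm x.
Proof.
have -> : vnorm (a *: x) = Num.sqrt (sq (a *: x)).
  by rewrite -vnorm_sq sqrtr_sqr ger0_norm // vnorm_ge0.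
rewrite sqZ sqrtrM ?sqr_ge0 // sqrtr_sqr; by congr (_ * _).
Qed.

Lemma cauchy x y : dot x y <= vnorm x * vnorm y.
Proof.
have [->|xn0] := eqVneq x 0; first by rewrite dot0l vnorm0 mul0r.
have [->|yn0] := eqVneq y 0; first by rewrite dotC dot0l vnorm0 mulr0.
have ax : 0 < vnorm x.
  rewrite lt_def vnorm_ge0 andbT; apply/eqP => /vnorm_eq0 h; by rewrite h eqxx in xn0.
have ay : 0 < vnorm y.
  rewrite lt_def vnorm_ge0 andbT; apply/eqP => /vnorm_eq0 h; by rewrite h eqxx in yn0.
have := @young x y _ (divr_gt0 ay ax).
rewrite -!vnorm_sq.
have -> : vnorm y / vnorm x * vnorm x ^+ 2 + vnorm y ^+ 2 / (vnorm y / vnorm x)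
   = 2 * (vnorm x * vnorm y).
  by field; rewrite !gt_eqF.
by rewrite ler_pM2l.
Qed.

Definition cr (M : 'M[R]_D) : R := \sum_(i < D) (\sum_(j < D) `|M i j|) ^+ 2.

Lemma cr_ge0 M : 0 <= cr M.
Proof. by apply: sumr_ge0 => i _; rewrite sqr_ge0. Qed.

Lemma entry_le x j : `|x j 0| <= vnorm x.
Proof.
rewrite -sqrtr_sqr /vnorm ler_wsqrtr // (bigD1 j) //= lerDl.
by apply: sumr_ge0 => i _; rewrite sqr_ge0.
Qed.

Lemma sq_mul_le M x : sq (M *m x) <= cr M * sq x.
Proof.
rewrite /sq /dot /cr mulr_suml; apply: ler_sum => i _.
have h : `|(M *m x) i 0| <= (\sum_j `|M i j|) * vnorm x.
  rewrite mxE (le_trans (ler_norm_sum _ _ _)) // mulr_suml.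
  by apply: ler_sum => j _; rewrite normrM ler_wpM2l ?entry_le.
rewrite -expr2 -real_normK ?num_real //.
rewrite (le_trans (lerXn2r _ _ _ h)) ?nnegrE ?normr_ge0 ?mulr_ge0 ?sumr_ge0 ?vnorm_ge0 //.
by rewrite exprMn vnorm_sq.
Qed.

Local Open Scope classical_set_scope.
Lemma specnorm_ub M x : vnorm x <= 1 -> vnorm (M *m x) <= specnorm M.
Proof.
move=> hx; apply: sup_upper_bound; last by exists x.
split; first by exists (vnorm (M *m x)), x.
exists (1 + cr M) => _ [y hy <-].
have h1 : vnorm (M *m y) ^+ 2 <= cr M.
  rewrite vnorm_sq (le_trans (sq_mul_le _ _)) // -[X in _ <= X]mulr1 ler_wpM2l ?cr_ge0 //.
  rewrite -vnorm_sq expr_le1 ?vnorm_ge0 //.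
have := vnorm_ge0 (M *m y); nra.
Qed.

Lemma specnorm_ge0 M : 0 <= specnorm M.
Proof.
have := @specnorm_ub M 0; rewrite mulmx0 vnorm0; apply; exact: ler01.
Qed.

Lemma specnorm_le M x : vnorm (M *m x) <= specnorm M * vnorm x.
Proof.
have [h|h] := eqVneq (vnorm x) 0.
  by rewrite (@vnorm_eq0 x h) mulmx0 vnorm0 mulr0.
have hp : 0 < vnorm x by rewrite lt_def h vnorm_ge0.
have := @specnorm_ub M ((vnorm x)^-1 *: x).
rewrite vnormZ ger0_norm ?invr_ge0 ?vnorm_ge0 // mulVf // lexx => /(_ isT).
by rewrite -scalemxAr vnormZ ger0_norm ?invr_ge0 ?vnorm_ge0 // ler_pdivrMl // mulrC.
Qed.

Lemma specnorm_sq M x : sq (M *m x) <= specnorm M ^+ 2 * sq x.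
Proof.
rewrite -!vnorm_sq -exprMn; apply: lerXn2r; last exact: specnorm_le.
  by rewrite nnegrE vnorm_ge0.
by rewrite nnegrE mulr_ge0 ?specnorm_ge0 ?vnorm_ge0.
Qed.

Lemma delta_diag (Lam : 'M[R]_D) i : is_diag_mx Lam ->
  delta_mx 0 i *m Lam = Lam i i *: (delta_mx 0 i : 'rV[R]_D).
Proof.
move=> /is_diag_mxP hd; apply/matrixP => a j; rewrite (ord1 a) !mxE.
rewrite (bigD1 i) //= big1 => [|k ki]; last by rewrite !mxE (negbTE ki) andbF mul0r.
rewrite mxE (@eqxx _ (0 : 'I_1)) (@eqxx _ i) /= mul1r addr0.
have [->|ji] := eqVneq j i; first by rewrite mulr1.
rewrite hd ?mulr0 // eq_sym; exact: ji.
Qed.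

Lemma diag_dot_ge (Q Lam G : 'M[R]_D) lam : Q \in unitmx -> is_diag_mx Lam ->
  G = Q *m Lam *m invmx Q -> is_lambda_min G lam ->
  forall x, lam * sq x <= dot x (Lam *m x).
Proof.
move=> uQ dL hG [_ hmin] x.
have eig i : lam <= Lam i i.
  apply: hmin; apply/eigenvalueP; exists (delta_mx 0 i *m invmx Q).
    by rewrite hG !mulmxA mulmxKV // delta_diag // scalemxAl.
  apply/eqP => h0; have := congr1 (mulmx^~ Q) h0; rewrite /= mulmxKV // mul0mx.
  by move=> /matrixP/(_ 0 i); rewrite !mxE !eqxx /= => /eqP; rewrite oner_eq0.
rewrite /sq /dot mulr_sumr; apply: ler_sum => i _.
have -> : (Lam *m x) i 0 = Lam i i * x i 0.
  rewrite mxE (bigD1 i) //= big1 ?addr0 // => k ki.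
  by rewrite (is_diag_mxP dL i k) ?mul0r // eq_sym; exact: ki.
rewrite mulrCA; have h := eig i; have := sqr_ge0 (x i 0); nra.
Qed.
End Vec.

Section Step.
Variable R : realType.
Variables D n : nat.

Lemma avgV_dot (u : 'cV[R]_D) (w : 'I_n -> 'cV[R]_D) :
  n%:R^-1 * \sum_t dot u (w t) = dot u (avgV w).
Proof. by rewrite /avgV dotZr dot_sumr. Qed.

Lemma avgV_lin (H : 'I_n -> 'M[R]_D) (v : 'I_n -> 'cV[R]_D) u :
  avgV (fun t => H t *m u + v t) = avgM H *m u + avgV v.
Proof.
by rewrite /avgV /avgM big_split /= scalerDr -scalemxAl mulmx_suml.
Qed.

Lemma step_bound (H : 'I_n -> 'M[R]_D) (v : 'I_n -> 'cV[R]_D) (u : 'cV[R]_D)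
  (s lam K : R) :
  (0 < n)%N -> 0 <= s -> (0 < s -> 0 < lam) -> 6 * (s * s * K) <= s * lam ->
  (forall x, lam * sq x <= dot x (avgM H *m x)) ->
  (forall x, n%:R^-1 * \sum_t sq (H t *m x) <= K * sq x) ->
  n%:R^-1 * \sum_t sq (u - s *: (H t *m u + v t)) <=
   Num.max 0 (1 - 2 * s * lam / 3) * sq u +
   (s / lam * sq (avgV v) + 2 * s ^+ 2 * (n%:R^-1 * \sum_t sq (v t))).
Proof.
move=> n0 s0 slam hK hlam hH.
have nR : n%:R != 0 :> R by rewrite pnatr_eq0 -lt0n.
have [->|sp] := eqVneq s 0.
  under eq_bigr do rewrite scale0r subr0.
  rewrite sumr_const card_ord -[sq u *+ n]mulr_natl mulrA mulVf // mul1r.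

  rewrite !(mulr0, mul0r, addr0, subr0) expr0n /= !(mulr0, mul0r, addr0, subr0).
  have h : (1:R) <= Num.max 0 1 by rewrite le_max lexx orbT.
  have := sq_ge0 u; nra.
have spos : 0 < s by rewrite lt_def sp s0.
have lp := slam spos.
under eq_bigr do rewrite sqB_scale.
rewrite !big_split /= sumr_const card_ord -[sq u *+ n]mulr_natl.
rewrite !mulrDr mulrA mulVf // mul1r.
have e1 : n%:R^-1 * \sum_t - (2 * s * dot u (H t *m u + v t)) =
   - (2 * s) * dot u (avgV (fun t => H t *m u + v t)).
  rewrite -avgV_dot [RHS]mulrCA; congr (_ * _).
  by rewrite mulr_sumr; apply: eq_bigr => t _; rewrite mulNr.
rewrite e1 avgV_lin dotDr.
set q := sq u; set dl := dot u (avgM H *m u); set dv := dot u (avgV v).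
set sv := sq (avgV v); set av := n%:R^-1 * \sum_t sq (v t).
set A := n%:R^-1 * \sum_t s ^+ 2 * sq (H t *m u + v t).
have hA : A <= s ^+ 2 * (2 * K * q + 2 * av).
  rewrite /A -mulr_sumr mulrCA ler_pM2l ?exprn_gt0 //.
  apply: (@le_trans _ _ (n%:R^-1 * \sum_t (2 * sq (H t *m u) + 2 * sq (v t)))).
    rewrite ler_pM2l ?invr_gt0 ?ltr0n //.
    by apply: ler_sum => t _; exact: sqD_le.
  rewrite big_split /= -!mulr_sumr mulrDr.
  rewrite [_ * (2 * \sum_t sq (H t *m u))]mulrCA [_ * (2 * \sum_t sq (v t))]mulrCA -/av.
  have := hH u; rewrite -/q; lra.
have h1 : lam * q <= dl := hlam u.
have h2 : 2 * (- dv) <= lam * q + sv / lam.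
  by have := @young _ _ u (- avgV v) lam lp; rewrite dotNr sqN.
have q0 : 0 <= q := sq_ge0 u.
have h4 : 6 * (s * s * K) * q <= s * lam * q := ler_wpM2r q0 hK.
have h5 : (1 - 2 * s * lam / 3) * q <= Num.max 0 (1 - 2 * s * lam / 3) * q.
  by apply: (ler_wpM2r q0); rewrite le_max lexx orbT.
have h1' : s * (lam * q) <= s * dl := ler_wpM2l s0 h1.
have h2' : s * (2 * (- dv)) <= s * (lam * q + sv / lam) := ler_wpM2l s0 h2.
move: hA h4 h5 h1' h2'; rewrite /= !expr2; set L := Num.max _ _ => hA h4 h5 h1' h2'.
have e2 : s / lam * sv = s * (sv / lam) by rewrite mulrAC -mulrA.
lra.
Qed.
End Step.

Section Iter.
Variable R : realType.

Lemma sum_tupleS (T : finType) k (F : k.+1.-tuple T -> R) :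
  \sum_(ts : k.+1.-tuple T) F ts =
  \sum_(t : T) \sum_(ts : k.-tuple T) F (cons_tuple t ts).
Proof.
rewrite pair_big /=.
rewrite (reindex (fun p : T * k.-tuple T => cons_tuple p.1 p.2)) //=.
exists (fun ts : k.+1.-tuple T => (thead ts, behead_tuple ts)).
  by move=> [t ts] _ /=; rewrite theadE; congr pair; apply: val_inj.
by move=> ts _; rewrite [RHS]tuple_eta; apply: val_inj.
Qed.

Lemma sum_tuple0 (T : finType) (F : 0.-tuple T -> R) :
  \sum_(ts : 0.-tuple T) F ts = F [tuple].
Proof.
by rewrite (big_pred1 [tuple]) // => ts /=; apply/esym/eqP; exact: tuple0.
Qed.

Lemma sum_tuple_const n k : (0 < n)%N ->
  \sum_(ts : k.-tuple 'I_n) (n%:R ^- k : R) = 1.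
Proof.
move=> n0; rewrite sumr_const card_tuple card_ord -(mulr_natr (n%:R ^- k)) natrX; apply: mulVf.
by rewrite expf_neq0 // pnatr_eq0 -lt0n.
Qed.

Lemma iter_bound (X : Type) n (st : X -> 'I_n -> X) (V : X -> R) rho c :
  (0 < n)%N -> 0 <= rho ->
  (forall z, n%:R^-1 * \sum_t V (st z t) <= rho * V z + c) ->
  forall k z, \sum_(ts : k.-tuple 'I_n) n%:R ^- k * V (foldl st z ts)
      <= rho ^+ k * V z + c * \sum_(i < k) rho ^+ i.
Proof.
move=> n0 r0 hst; elim=> [|k IH] z.
  by rewrite sum_tuple0 /= !expr0 invr1 big_ord0 mulr0 addr0.
have nR : n%:R != 0 :> R by rewrite pnatr_eq0 -lt0n.
rewrite sum_tupleS.
have -> : \sum_t \sum_(ts : k.-tuple 'I_n) n%:R ^- k.+1 * V (foldl st z (cons_tuple t ts))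
   = n%:R^-1 * \sum_t \sum_(ts : k.-tuple 'I_n) n%:R ^- k * V (foldl st (st z t) ts).
  rewrite mulr_sumr; apply: eq_bigr => t _; rewrite mulr_sumr; apply: eq_bigr => ts _.
  by rewrite exprS invfM mulrA.
apply: (@le_trans _ _ (n%:R^-1 * \sum_t (rho ^+ k * V (st z t) + c * \sum_(i < k) rho ^+ i))).
  rewrite ler_pM2l ?invr_gt0 ?ltr0n //; apply: ler_sum => t _; exact: IH.
rewrite big_split /= mulrDr -mulr_sumr mulrCA sumr_const card_ord.
rewrite -(mulr_natl (c * \sum_(i < k) rho ^+ i) n) [n%:R^-1 * (n%:R * _)]mulrA mulVf // mul1r.
rewrite big_ord_recr /= exprSr.
have h := ler_wpM2l (exprn_ge0 k r0) (hst z).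
move: h; rewrite mulrDr => h.
rewrite mulrDr; lra.
Qed.

Lemma geo_le (rho : R) : 0 <= rho < 1 -> forall k, \sum_(i < k) rho ^+ i <= (1 - rho)^-1.
Proof.
move=> /andP[r0 r1]; have p : 0 < 1 - rho by rewrite subr_gt0.
elim=> [|k IH]; first by rewrite big_ord0 invr_ge0 ltW.
rewrite big_ord_recl expr0.
under eq_bigr do rewrite exprS.
rewrite -mulr_sumr.
have h := ler_wpM2l r0 IH.
have e : 1 + rho * (1 - rho)^-1 = (1 - rho)^-1 by field; rewrite gt_eqF.
by rewrite -e lerD2l.
Qed.

Local Open Scope ereal_scope.
Lemma series_geo_le (g Y : R) (T : nat -> \bar R) : (0 <= g < 1)%R ->
  (forall k, 0 <= T k) -> (forall k, T k <= Y%:E) ->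
  \sum_(0 <= k <oo) ((1 - g) * g ^+ k)%:E * T k <= Y%:E.
Proof.
move=> /andP[g0 g1] T0 TY.
have c0 k : (0 <= (1 - g) * g ^+ k)%R by rewrite mulr_ge0 ?exprn_ge0 // subr_ge0 ltW.
have Y0 : (0 <= Y)%R by rewrite -lee_fin (le_trans (T0 0%N)).
have h : forall n, (0 <= n)%N -> true -> 0 <= ((1 - g) * g ^+ n)%:E * T n.
  by move=> n _ _; rewrite mule_ge0 ?lee_fin.
move: h => /ereal_nondecreasing_series/ereal_nondecreasing_cvgn/cvg_lim => -> //.
apply: ge_ereal_sup => _ [N _ <-] /=.
apply: (@le_trans _ _ (\sum_(0 <= k < N) (((1 - g) * g ^+ k) * Y)%:E)).
  apply: lee_sum => k _; rewrite EFinM; apply: (lee_wpmul2l _ (TY k)); by rewrite lee_fin.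
rewrite sumEFin lee_fin -mulr_suml.
have geo : forall N, (\sum_(0 <= k < N) (1 - g) * g ^+ k = 1 - g ^+ N)%R.
  elim=> [|M IH]; first by rewrite big_geq // expr0 subrr.
  by rewrite big_nat_recr //= IH exprSr; ring.
rewrite geo; have := exprn_ge0 N g0; nra.
Qed.
End Iter.

Section Exp.
Variable R : realType.

Lemma sumS_le n (B : nat) (F G : {set 'I_n} -> \bar R) :
  (forall S : {set 'I_n}, #|S| == B -> (F S <= G S)%E) ->
  (\sum_(S : {set 'I_n} | #|S| == B) F S <= \sum_(S : {set 'I_n} | #|S| == B) G S)%E.
Proof. by move=> h; apply: lee_sum. Qed.

Lemma expect_bound n D B (Gt : 'I_n -> 'M[R]_D) gt s (f : 'cV[R]_D -> R)
   (al be : {set 'I_n} -> R) :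
  (0 < B)%N -> (0 < n)%N -> (forall z, 0 <= f z) ->
  (forall S, 0 <= al S) -> (forall S, 0 <= be S) ->
  (forall S : {set 'I_n}, #|S| == B -> forall zm k,
     \sum_(ts : k.-tuple 'I_n) n%:R ^- k * f (inner_loop Gt (batchM Gt B S) (batchV gt B S) s zm ts)
       <= al S * f zm + be S) ->
  forall m, exists a b, [/\ 0 <= a, 0 <= b & forall z,
     (0 <= scsg_expect Gt gt B s f m z /\ scsg_expect Gt gt B s f m z <= (a * f z + b)%:E)%E].
Proof.
move=> B0 n0 f0 al0 be0 hS; elim=> [|m [a [b [a0 b0 IH]]]].
  exists 1, 0; split=> // z; split; first by rewrite /= lee_fin.
  by rewrite /= mul1r addr0.
set p : R := ('C(n, B)%:R)^-1.
have p0 : 0 <= p by rewrite /p invr_ge0 ler0n.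
set g : R := B%:R / (B.+1)%:R.
have g01 : 0 <= g < 1.
  rewrite /g divr_ge0 ?ler0n //= ltr_pdivrMr ?ltr0n // mul1r ltr_nat //.
exists (\sum_(S : {set 'I_n} | #|S| == B) p * (a * al S)).
exists (\sum_(S : {set 'I_n} | #|S| == B) p * (a * be S + b)).
split.
- by apply: sumr_ge0 => S _; rewrite mulr_ge0 ?mulr_ge0.
- by apply: sumr_ge0 => S _; rewrite mulr_ge0 ?addr_ge0 ?mulr_ge0.
move=> z.
have T0 : forall S k, (0 <= \sum_(ts : k.-tuple 'I_n) ((n%:R ^- k)%:E *
     scsg_expect Gt gt B s f m (inner_loop Gt (batchM Gt B S) (batchV gt B S) s z ts)))%E.
  move=> S k; apply: sume_ge0 => ts _; rewrite mule_ge0 ?(IH _).1 // lee_fin.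
split.
  rewrite /=; apply: sume_ge0 => S _; rewrite mule_ge0 ?lee_fin //.
  apply: nneseries_ge0 => k _ _; rewrite mule_ge0 ?T0 // lee_fin.
  by rewrite mulr_ge0 ?exprn_ge0 ?subr_ge0 ?(andP g01).1 // ltW // (andP g01).2.
have -> : ((\sum_(S : {set 'I_n} | #|S| == B) p * (a * al S)) * f z +
    \sum_(S : {set 'I_n} | #|S| == B) p * (a * be S + b) =
    \sum_(S : {set 'I_n} | #|S| == B) p * (a * (al S * f z + be S) + b))%R.
  by rewrite mulr_suml -big_split; apply: eq_bigr => S _ /=; ring.
rewrite /= -sumEFin.

apply: sumS_le => S hSB.
rewrite (EFinM p); apply: lee_wpmul2l; first by rewrite lee_fin.
apply: series_geo_le => // k; first exact: T0.
apply: (@le_trans _ _ (\sum_(ts : k.-tuple 'I_n) ((n%:R ^- k)%:E *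
     (a * f (inner_loop Gt (batchM Gt B S) (batchV gt B S) s z ts) + b)%:E)%E)).
  apply: lee_sum => ts _; apply: lee_wpmul2l; last exact: (IH _).2.
  by rewrite lee_fin invr_ge0 exprn_ge0 ?ler0n.
rewrite sumEFin lee_fin.
under eq_bigr do rewrite mulrDr mulrCA.
rewrite big_split /= -mulr_sumr -mulr_suml sum_tuple_const // mul1r lerD2r.
exact: (ler_wpM2l a0 (hS S hSB z k)).
Qed.
End Exp.

Section Alg.
Variable R : realType.
Variable D : nat.

Lemma dotmx (x y : 'cV[R]_D) : dot x y = (x^T *m y) 0 0.
Proof. by rewrite /dot mxE; apply: eq_bigr => i _; rewrite mxE. Qed.

Lemma sq_quad (M : 'M[R]_D) y : sq (M *m y) = dot y ((M^T *m M) *m y).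
Proof. by rewrite /sq !dotmx trmx_mul !mulmxA. Qed.

Lemma avg_quad n (F : 'I_n -> 'M[R]_D) y :
  n%:R^-1 * \sum_t dot y (F t *m y) = dot y (avgM F *m y).
Proof. by rewrite /avgM -scalemxAl mulmx_suml dotZr dot_sumr. Qed.

Lemma step_id (Qi Q Gt Gm : 'M[R]_D) (gm zs zm z : 'cV[R]_D) s : Q *m Qi = 1%:M ->
  Qi *m (z - s *: (Gt *m z + (Gm - Gt) *m zm - gm) - zs) =
  Qi *m (z - zs) - s *: (Qi *m Gt *m Q *m (Qi *m (z - zs)) +
     (Qi *m (Gm - Gt) *m Q *m (Qi *m (zm - zs)) + Qi *m (Gm *m zs - gm))).
Proof.
move=> hQ.
have K X : Q *m (Qi *m X) = X :> 'cV[R]_D by rewrite mulmxA hQ mul1mx.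
rewrite -[Qi *m Gt *m Q *m _]mulmxA -[Qi *m Gt *m _]mulmxA K.
rewrite -[Qi *m (Gm - Gt) *m Q *m _]mulmxA -[Qi *m (Gm - Gt) *m _]mulmxA K.
rewrite -!mulmxDr scalemxAr -mulmxBr; congr (_ *m _).
rewrite !mulmxBl !mulmxBr.
set a1 := Gt *m z; set a2 := Gm *m zm; set a3 := Gt *m zm; set a4 := Gt *m zs.
set a5 := Gm *m zs.
apply/matrixP => i j; rewrite !mxE; ring.
Qed.

Lemma avgV_const n (e : 'cV[R]_D) : (0 < n)%N -> avgV (fun _ : 'I_n => e) = e.
Proof.
move=> n0; rewrite /avgV sumr_const card_ord -(scaler_nat n e) scalerA mulVf ?scale1r //.
by rewrite pnatr_eq0 -lt0n.
Qed.

Lemma noise_bound n (P : 'I_n -> 'M[R]_D) (e x : 'cV[R]_D) s lam : (0 < n)%N ->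
  0 <= s -> 0 <= s / lam ->
  s / lam * sq (avgV (fun t => P t *m x + e)) +
    2 * s ^+ 2 * (n%:R^-1 * \sum_t sq (P t *m x + e)) <=
  (s / lam * (2 * cr (avgM P)) + 2 * s ^+ 2 * (n%:R^-1 * \sum_t 2 * cr (P t))) * sq x
  + (s / lam * (2 * sq e) + 2 * s ^+ 2 * (2 * sq e)).
Proof.
move=> n0 s0 sl0.
have nR : n%:R != 0 :> R by rewrite pnatr_eq0 -lt0n.
have h1 : sq (avgV (fun t => P t *m x + e)) <= 2 * cr (avgM P) * sq x + 2 * sq e.
  rewrite avgV_lin avgV_const // (le_trans (sqD_le _ _)) // lerD2r -mulrA.
  by rewrite ler_pM2l ?ltr0Sn // sq_mul_le.
have h2 : n%:R^-1 * \sum_t sq (P t *m x + e) <=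
    (n%:R^-1 * \sum_t 2 * cr (P t)) * sq x + 2 * sq e.
  apply: (@le_trans _ _ (n%:R^-1 * \sum_t (2 * cr (P t) * sq x + 2 * sq e))).
    rewrite ler_pM2l ?invr_gt0 ?ltr0n //; apply: ler_sum => t _.
    rewrite (le_trans (sqD_le _ _)) // lerD2r -mulrA.
    by rewrite ler_pM2l ?ltr0Sn // sq_mul_le.
  rewrite big_split /= sumr_const card_ord mulrDr -mulr_suml mulrA.
  by rewrite -(mulr_natl (2 * sq e) n) [n%:R^-1 * (n%:R * _)]mulrA mulVf // mul1r.
have h1' := ler_wpM2l sl0 h1.
have h2' := ler_wpM2l (mulr_ge0 (ler0n _ 2) (exprn_ge0 2 s0)) h2.
move: h1' h2'; set A := sq (avgV _); set B := n%:R^-1 * _; set C := n%:R^-1 * _.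
move=> h1' h2'; lra.
Qed.
End Alg.

Unset Implicit Arguments. Set Strict Implicit.

Theorem lemma3 (R : realType) (State : Type) (n d B : nat) (disc : R)
  (s : nat -> State) (r : nat -> R) (phi : State -> 'cV[R]_d)
  (beta lamA lamC lamG sigma : R) (Q Lam : 'M[R]_(d + d)) (z0 : 'cV[R]_(d + d)) :
  let At := fun t : 'I_n => Ahat_t disc (phi (s t)) (phi (s t.+1)) in
  let bt := fun t : 'I_n => bhat_t (r t) (phi (s t)) in
  let Ct := fun t : 'I_n => Chat_t (phi (s t)) in
  let A := avgM At in
  let b := avgV bt in
  let C := avgM Ct in
  let Gt := fun t : 'I_n => G_t beta (At t) (Ct t) in
  let gt := fun t : 'I_n => g_t beta (bt t) in
  let G := avgM Gt in
  let zstar : 'cV[R]_(d + d) := col_mx (invmx A *m b) 0 in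
  let LG2 := specnorm (avgM (fun t : 'I_n => (Gt t)^T *m Gt t)) in
  (0 < B <= n)%N ->
  A \in unitmx ->
  (forall v : 'cV[R]_d, v != 0 -> 0 < (v^T *m C *m v) 0 0) ->
  is_lambda_max (A^T *m invmx C *m A) lamA ->
  is_lambda_min C lamC ->
  beta = 8 * lamA / lamC ->
  Q \in unitmx -> is_diag_mx Lam -> G = Q *m Lam *m invmx Q ->
  is_lambda_min G lamG ->
  0 <= sigma -> sigma <= lamG / (6 * kappa Q ^+ 2 * LG2) ->
  forall m : nat,
    (scsg_expect Gt gt B sigma
       (fun z => (vnorm (invmx Q *m (z - zstar)) ^+ 2)%R) m z0 < +oo)%E.
Proof.
move=> At bt Ct A b C Gt gt G zstar LG2 /andP[B0 Bn] uA hC hlA hlC hbeta uQ dL hG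
  hlG s0 sle m.
have n0 : (0 < n)%N := leq_trans B0 Bn.
have nR : n%:R != 0 :> R by rewrite pnatr_eq0 -lt0n.
set Qi := invmx Q.
set f := fun z : 'cV[R]_(d + d) => (vnorm (Qi *m (z - zstar)) ^+ 2)%R.
set K := kappa Q ^+ 2 * LG2.
have LG0 : 0 <= LG2 := specnorm_ge0 _.
have kap0 : 0 <= kappa Q by rewrite /kappa mulr_ge0 ?specnorm_ge0.
have [slam hsK] : (0 < sigma -> 0 < lamG) /\ 6 * (sigma * sigma * K) <= sigma * lamG.
  have [->|sn0] := eqVneq sigma 0; first by split; [rewrite ltxx | rewrite !mul0r mulr0].
  have sp : 0 < sigma by rewrite lt_def sn0 s0.
  set Dn := 6 * kappa Q ^+ 2 * LG2.
  have Dn0 : 0 <= Dn by rewrite /Dn; apply: mulr_ge0 => //; apply: mulr_ge0; [lra | exact: exprn_ge0].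
  have [Dz|Dnz] := eqVneq Dn 0.
    by move: sle; rewrite -/Dn Dz invr0 mulr0 => h; move: (lt_le_trans sp h); rewrite ltxx.
  have Dp : 0 < Dn by rewrite lt_def Dnz Dn0.
  move: sle; rewrite -/Dn ler_pdivlMr // => h.
  have lp : 0 < lamG by apply: lt_le_trans h; rewrite mulr_gt0.
  split; first by move=> _.
  have -> : 6 * (sigma * sigma * K) = sigma * (sigma * Dn) by rewrite /Dn /K; ring.
  by rewrite ler_pM2l.
have slg0 : 0 <= sigma / lamG.
  have [->|sn0] := eqVneq sigma 0; first by rewrite mul0r.
  by rewrite divr_ge0 // ltW // slam // lt_def sn0 s0.
have slp : 0 <= sigma * lamG.
  have [->|sn0] := eqVneq sigma 0; first by rewrite mul0r.
  by rewrite mulr_ge0 // ltW // slam // lt_def sn0 s0.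
set rho := Num.max 0 (1 - 2 * sigma * lamG / 3).
have r0 : 0 <= rho by rewrite le_max lexx.
have r1 : rho <= 1.
  rewrite ge_max ler01 /=; lra.
set M0 := (1 - rho)^-1.
have M00 : 0 <= M0 by rewrite invr_ge0 subr_ge0.
set H := fun t : 'I_n => Qi *m Gt t *m Q.
have QQi : Q *m Qi = 1%:M by rewrite mulmxV.
have hF1 : avgM H = Lam.
  rewrite /H /avgM -mulmx_suml -mulmx_sumr scalemxAl scalemxAr.
  rewrite -/(avgM Gt) -/G hG !mulmxA mulVmx // mul1mx mulmxKV //.
have hlamH : forall x, lamG * sq x <= dot x (avgM H *m x).
  by move=> x; rewrite hF1; exact: (diag_dot_ge uQ dL hG hlG).
have hHK : forall x, n%:R^-1 * \sum_t sq (H t *m x) <= K * sq x.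
  move=> x; set y := Q *m x.
  have e1 t : H t *m x = Qi *m (Gt t *m y) by rewrite /H /y !mulmxA.
  under eq_bigr do rewrite e1.
  apply: (@le_trans _ _ (n%:R^-1 * \sum_t (specnorm Qi ^+ 2 * sq (Gt t *m y)))).
    rewrite ler_pM2l ?invr_gt0 ?ltr0n //; apply: ler_sum => t _; exact: specnorm_sq.
  rewrite -mulr_sumr mulrCA.
  under eq_bigr do rewrite sq_quad.
  rewrite avg_quad.
  have h1 : dot y (avgM (fun t => (Gt t)^T *m Gt t) *m y) <= LG2 * sq y.
    apply: (le_trans (cauchy _ _)).
    rewrite -vnorm_sq expr2 mulrCA; apply: ler_wpM2l; first exact: vnorm_ge0.
    exact: specnorm_le.
  have h2 : sq y <= specnorm Q ^+ 2 * sq x := specnorm_sq _ _.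
  have := ler_wpM2l LG0 h2.
  have sqi := exprn_ge0 2 (specnorm_ge0 Qi).
  move=> h3; have := ler_wpM2l sqi (le_trans h1 h3).
  by rewrite /K /kappa; move=> h4; apply: (le_trans h4); rewrite exprMn; lra.
have f0 : forall z, 0 <= f z by move=> z; rewrite /f exprn_ge0 // vnorm_ge0.
set P := fun (S : {set 'I_n}) (t : 'I_n) => Qi *m (batchM Gt B S - Gt t) *m Q.
set e := fun (S : {set 'I_n}) => Qi *m (batchM Gt B S *m zstar - batchV gt B S).
set alS := fun S => sigma / lamG * (2 * cr (avgM (P S))) +
   2 * sigma ^+ 2 * (n%:R^-1 * \sum_t 2 * cr (P S t)).
set beS := fun S => sigma / lamG * (2 * sq (e S)) + 2 * sigma ^+ 2 * (2 * sq (e S)).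
have alS0 : forall S, 0 <= alS S.
  move=> S; rewrite /alS addr_ge0 // mulr_ge0 // ?mulr_ge0 ?cr_ge0 ?exprn_ge0 //.
  by apply: sumr_ge0 => t _; rewrite mulr_ge0 ?cr_ge0.
have beS0 : forall S, 0 <= beS S.
  by move=> S; rewrite /beS addr_ge0 // mulr_ge0 // ?mulr_ge0 ?sq_ge0 ?exprn_ge0.
have hep : forall S : {set 'I_n}, #|S| == B -> forall zm k,
    \sum_(ts : k.-tuple 'I_n) n%:R ^- k *
       f (inner_loop Gt (batchM Gt B S) (batchV gt B S) sigma zm ts)
    <= (1 + M0 * alS S) * f zm + M0 * beS S.
  move=> S _ zm k.
  set st := fun z (t : 'I_n) => z - sigma *: (Gt t *m z + (batchM Gt B S - Gt t) *m zm - batchV gt B S).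
  set v := fun t => P S t *m (Qi *m (zm - zstar)) + e S.
  set c := sigma / lamG * sq (avgV v) + 2 * sigma ^+ 2 * (n%:R^-1 * \sum_t sq (v t)).
  have hst : forall z, n%:R^-1 * \sum_t f (st z t) <= rho * f z + c.
    move=> z.
    have e2 t : f (st z t) = sq (Qi *m (z - zstar) - sigma *: (H t *m (Qi *m (z - zstar)) + v t)).
      by rewrite /f vnorm_sq /st (@step_id _ _ Qi Q)...
    under eq_bigr do rewrite e2.
    rewrite /f vnorm_sq.
    exact: step_bound n0 s0 slam hsK hlamH hHK.
  apply: (le_trans (iter_bound n0 r0 hst k zm)).
  have c0 : 0 <= c.
    rewrite /c addr_ge0 //; first exact: mulr_ge0 slg0 (sq_ge0 _).
    apply: mulr_ge0; first by rewrite mulr_ge0 ?exprn_ge0.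
    apply: mulr_ge0; first by rewrite invr_ge0 ler0n.
    by apply: sumr_ge0 => t _; exact: sq_ge0.
  have hc : c <= alS S * f zm + beS S.
    by rewrite /f vnorm_sq; exact: noise_bound.
  have hgeo : c * \sum_(i < k) rho ^+ i <= c * M0.
    have [s00|sn0] := eqVneq sigma 0.
      have -> : c = 0 by rewrite /c s00 !mul0r expr0n /= mulr0 mul0r addr0.
      by rewrite !mul0r.
    have sp : 0 < sigma by rewrite lt_def sn0 s0.
    have lp := slam sp.
    have rr : 0 <= rho < 1.
      rewrite r0 /= gt_max ltr01 /=.
      have : 0 < sigma * lamG by rewrite mulr_gt0.
      lra.
    exact: (ler_wpM2l c0 (geo_le rr k)).
  have hrk : rho ^+ k * f zm <= f zm.
    have hk : rho ^+ k <= 1 by rewrite exprn_ile1.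
    have hk0 : 0 <= rho ^+ k by rewrite exprn_ge0.
    have := f0 zm; nra.
  have hcM := ler_wpM2r M00 hc.
  move: hcM hgeo hrk; set F := f zm; set CS := c * _; move=> hcM hgeo hrk.
  have : M0 * alS S * F = (alS S * F) * M0 by ring.
  lra.
have [a [bb [a0 bb0 IH]]] := expect_bound (al := fun S => 1 + M0 * alS S)
   (be := fun S => M0 * beS S) B0 n0 f0
   (fun S => addr_ge0 ler01 (mulr_ge0 M00 (alS0 S)))
   (fun S => mulr_ge0 M00 (beS0 S)) hep m.
exact: (le_lt_trans (IH z0).2 (ltey _)).
Qed.
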